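(* Suppose both constraints are violated at the unconstrained Nash equilibrium, i.e., $B_{i,S}^{\text{NE}}<B_{i,S}^0$ for $i=1,2$. Then the Nash equilibrium with the regulatory constraints is of one of the following types: Type I. Both SPs increase their small-cell bandwidth allocations to exactly the required amount, i.e., $B_{1,S}=B_{1,S}^0$, $B_{2,S}=B_{2,S}^0$. Type II. One SP increases its small-cell bandwidth exactly to the required amount, while the other SP increases it further beyond the required amount, i.e., $B_{1,S}=B_{1,S}^0, B_{2,S}>B_{2,S}^0$ or $B_{1,S}>B_{1,S}^0, B_{2,S}=B_{2,S}^0$.
   Context: Two competing service providers (SPs), $i=1,2$, each have total licensed bandwidth $B_i$, split into macro-cell bandwidth $B_{i,M}$ and small-cell bandwidth $B_{i,S}$ with $B_{i,M}+B_{i,S}\le B_i$, $B_{i,M}\ge 0$, and regulatory constraint $B_{i,S}\ge B_{i,S}^0$. Macro-cells of SP $i$ provide rate $B_{i,M}R_0$, small-cells provide rate $\lambda_S B_{i,S}R_0$ with $\lambda_S>1$. Mobile users (density $N_m$) can only use macro-cells (with priority); fixed users (density $N_f$) can use macro- or small-cells of either SP. All users have utility $u(r)=r^{1-\alpha}/(1-\alpha)$, $\alpha\in(0,1)$, with demand $D(p)=(1/p)^{1/\alpha}$ at price $p$ per unit rate; users choose the lowest-priced service and fill its capacity. Each SP maximizes its revenue $p_{i,M}K_{i,M}D(p_{i,M})+p_{i,S}K_{i,S}D(p_{i,S})$ in a two-stage game: bandwidth splits first, then prices; the price equilibrium for any fixed bandwidth allocation is the market-clearing price. Without the regulatory constraints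 there is a unique Nash equilibrium with $B_{i,S}^{\text{NE}}=\frac{N_f\lambda_S^{1/\alpha-1}B_i}{N_f\lambda_S^{1/\alpha-1}+N_m}$, $B_{i,M}^{\text{NE}}=\frac{N_mB_i}{N_f\lambda_S^{1/\alpha-1}+N_m}$; with the constraints a Nash equilibrium exists and is unique. *)

(* Defs.v *)
From mathcomp Require Import all_boot all_order all_algebra.
From mathcomp Require Import all_classical all_reals all_analysis.
Import Order.TTheory GRing.Theory Num.Theory.
Local Open Scope ring_scope.

Set Implicit Arguments.
Unset Strict Implicit.
Unset Printing Implicit Defensive.

Section Model.
Variable R : realType.
(* Model parameters: density of mobile users Nm, of fixed users Nf,
   spectral efficiency R0, small-cell gain lamS (> 1), utility exponent alpha
   in (0,1). *)
Variables (Nm Nf R0 lamS alpha : R).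

Definition demand (p : R) : R := (p^-1) `^ (alpha^-1).

(* Second stage: market-clearing prices for given total macro bandwidth BM
   and total small-cell bandwidth BS (both SPs' cells of the same kind are
   perfect substitutes, so they clear at a common price).
   Mobile users only use macro cells, fixed users pick the cheapest service.
   - If Nm/BM >= Nf/(lamS*BS) (written multiplied out), the fixed users all
     use small cells: Nm D(pM) = BM R0 and Nf D(pS) = lamS BS R0,
     so pM = (Nm/(R0 BM))^alpha >= pS = (Nf/(R0 lamS BS))^alpha.
   - Otherwise both services clear at a common price p with
     (Nm+Nf) D(p) = (BM + lamS BS) R0. *)
Definition separate_market (BM BS : R) : bool := Nf * BM <= Nm * (lamS * BS).

Definition common_price (BM BS : R) : R :=
  ((Nm + Nf) / (R0 * (BM + lamS * BS))) `^ alpha.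

Definition macro_price (BM BS : R) : R :=
  if separate_market BM BS then (Nm / (R0 * BM)) `^ alpha
  else common_price BM BS.

Definition small_price (BM BS : R) : R :=
  if separate_market BM BS then (Nf / (R0 * (lamS * BS))) `^ alpha
  else common_price BM BS.

(* Revenue of an SP owning (BiM, BiS) when its competitor owns (BjM, BjS):
   p_{i,M} K_{i,M} D(p_{i,M}) + p_{i,S} K_{i,S} D(p_{i,S}); at the
   market-clearing prices the served traffic K D(p) equals the capacity,
   i.e. BiM R0 on macro cells and lamS BiS R0 on small cells. *)
Definition revenue (BiM BiS BjM BjS : R) : R :=
  let BM := BiM + BjM in
  let BS := BiS + BjS in
  macro_price BM BS * (BiM * R0) + small_price BM BS * (lamS * BiS * R0).

Definition feasible (Bi B0 BiM BiS : R) : Prop :=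
  0 <= BiM /\ B0 <= BiS /\ BiM + BiS <= Bi.

Definition constrained_NE (B1 B2 B01 B02 B1M B1S B2M B2S : R) : Prop :=
  [/\ feasible B1 B01 B1M B1S,
      feasible B2 B02 B2M B2S,
      (forall x y, feasible B1 B01 x y ->
          revenue x y B2M B2S <= revenue B1M B1S B2M B2S) &
      (forall x y, feasible B2 B02 x y ->
          revenue x y B1M B1S <= revenue B2M B2S B1M B1S)].

Definition BS_NE (Bi : R) : R :=
  Nf * lamS `^ (alpha^-1 - 1) * Bi / (Nf * lamS `^ (alpha^-1 - 1) + Nm).

End Model.

(* Main.v *)
Require Import Defs.
From mathcomp Require Import all_boot all_order all_algebra.
From mathcomp Require Import all_classical all_reals all_analysis.
From mathcomp Require Import ring lra.
Import Order.TTheory GRing.Theory Num.Theory.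
Import numFieldNormedType.Exports.
Local Open Scope ring_scope.
Local Open Scope classical_set_scope.
Set Implicit Arguments.
Unset Strict Implicit.
Lemma deriv_pos (R : realType) (f : R -> R) (d e : R) :
  is_derive (0:R) (1:R) f d -> 0 < d -> 0 < e -> exists t, 0 < t < e /\ f 0 < f t.
Proof.
move=> [Hd Heq] d0 e0.
have H : (fun h : R => h^-1 *: ((f \o shift 0) (h *: 1) - f 0)) @ 0^' --> d.
  by rewrite -Heq; exact: Hd.
have Hn : \forall h \near (0:R)^', 0 < h^-1 *: ((f \o shift 0) (h *: 1) - f 0).
  exact: (cvgr_gt d H 0 d0).
move: Hn => /nbhs_ballP [r /= r0 Hr].
pose t := Num.min r e / 2.
have t0 : 0 < t by rewrite divr_gt0 // lt_min r0 e0.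
have tr : t < Num.min r e by rewrite ltr_pdivrMr // ltr_pMr ?lt_min ?r0 ?e0 // ltr1n.
exists t; split.
  by rewrite t0 /=; apply: lt_le_trans tr _; rewrite ge_min lexx orbT.
have tr1 : t < r by apply: lt_le_trans tr _; rewrite ge_min lexx.
have := Hr t.
rewrite /ball /= sub0r normrN gtr0_norm // => /(_ tr1 (lt0r_neq0 t0)).
rewrite /GRing.scale /= ?mulr1 addr0 pmulr_rgt0 ?invr_gt0 // subr_gt0.
by [].
Qed.

Lemma deriv_neg (R : realType) (f : R -> R) (d e : R) :
  is_derive (0:R) (1:R) f d -> d < 0 -> 0 < e -> exists t, - e < t < 0 /\ f 0 < f t.
Proof.
move=> [Hd Heq] d0 e0.
have H : (fun h : R => h^-1 *: ((f \o shift 0) (h *: 1) - f 0)) @ 0^' --> d.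
  by rewrite -Heq; exact: Hd.
have Hn : \forall h \near (0:R)^', h^-1 *: ((f \o shift 0) (h *: 1) - f 0) < 0.
  exact: (cvgr_lt d H 0 d0).
move: Hn => /nbhs_ballP [r /= r0 Hr].
pose t := Num.min r e / 2.
have t0 : 0 < t by rewrite divr_gt0 // lt_min r0 e0.
have tr : t < Num.min r e by rewrite ltr_pdivrMr // ltr_pMr ?lt_min ?r0 ?e0 // ltr1n.
exists (- t); split.
  rewrite ltrN2 oppr_lt0 t0 andbT.
  by apply: lt_le_trans tr _; rewrite ge_min lexx orbT.
have tr1 : t < r by apply: lt_le_trans tr _; rewrite ge_min lexx.
have := Hr (- t).
rewrite /ball /= sub0r opprK gtr0_norm // => /(_ tr1).
rewrite oppr_eq0 (lt0r_neq0 t0) => /(_ isT).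
rewrite /GRing.scale /= ?mulr1 addr0 invrN mulNr oppr_lt0 pmulr_rgt0 ?invr_gt0 // subr_gt0.
by [].
Qed.
Lemma is_derive_aff (R : realType) (T k : R) :
  is_derive (0:R) (1:R) (fun t : R => T + k * t) k.
Proof.
have h1 : is_derive (0:R) (1:R) (cst T + k \*: id) (0 + k *: 1).
  apply: is_deriveD.
have -> : (fun t : R => T + k * t) = cst T + k \*: id by apply/funext.
by apply: is_derive_eq h1 _; rewrite add0r /GRing.scale /= mulr1.
Qed.

Lemma is_derive_pw (R : realType) (a T k al : R) : 0 < a -> 0 < T ->
  is_derive (0:R) (1:R) (fun t => (a / (T + k * t)) `^ al) (- al * (a/T)`^al / T * k).
Proof.
move=> a0 T0.
have hin := is_derive_aff T k.
have hV := is_deriveV (f := fun t : R => T + k * t) (lt0r_neq0 _) hin.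
rewrite mulr0 addr0 in hV.
have hV2 := hV T0.
have hZ := is_deriveZ a hV2.
have hg : is_derive (0:R) (1:R) (fun t : R => a / (T + k * t)) (a * (- T ^- 2 * k)).
  by apply: is_derive_eq hZ _.
have aT0 : 0 < a / T by rewrite divr_gt0.
have hp : is_derive (a / T) (1:R) (fun x : R => x `^ al) (al * (a/T) `^ (al - 1)).
  apply: DeriveDef; first by apply: (@derivable_powR R); rewrite in_itv /= aT0.
  by rewrite -derive1E (@powR_derive1 R) // in_itv /= aT0.
have hp' : is_derive ((fun t : R => a / (T + k * t)) 0) (1:R) (fun x : R => x `^ al) (al * (a/T) `^ (al - 1)).
  by rewrite /= mulr0 addr0.
have hc := is_derive1_comp (g := fun t : R => a / (T + k * t)) hp' hg.
apply: is_derive_eq hc _.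
rewrite powRB; last by rewrite (gt_eqF aT0) implybT.
rewrite powRr1; last exact: ltW.
field; rewrite ?(gt_eqF a0) ?(gt_eqF T0) //.
Qed.

Lemma is_derive_term (R : realType) (a T k c0 c1 al : R) : 0 < a -> 0 < T ->
  is_derive (0:R) (1:R) (fun t => (a / (T + k * t)) `^ al * (c0 + c1 * t))
    ((a/T)`^al * c1 + c0 * (- al * (a/T)`^al / T * k)).
Proof.
move=> a0 T0.
have h1 := is_derive_pw k al a0 T0.
have h2 := is_derive_aff c0 c1.
have h3 := is_deriveM h1 h2.
have -> : (fun t => (a / (T + k * t)) `^ al * (c0 + c1 * t)) =
   ((fun t => (a / (T + k * t)) `^ al) * (fun t : R => c0 + c1 * t)) by apply/funext.
apply: is_derive_eq h3 _.
by rewrite /= !mulr0 !addr0 /GRing.scale /=.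
Qed.

Section Model2.
Variables (R : realType) (Nm Nf R0 lamS alpha : R).
Hypotheses (hNm : 0 < Nm) (hNf : 0 < Nf) (hR0 : 0 < R0) (hlam : 1 < lamS)
  (ha0 : 0 < alpha) (ha1 : alpha < 1).

Let rev := revenue Nm Nf R0 lamS alpha.
Let sep := separate_market Nm Nf lamS.

Definition Gs (M S m s t : R) : R :=
  (Nm / R0 / (M + (-1) * t)) `^ alpha * (m * R0 + (- R0) * t) +
  (Nf / (R0 * lamS) / (S + 1 * t)) `^ alpha * (lamS * s * R0 + (lamS * R0) * t).

Definition pa (M : R) := (Nm / R0 / M) `^ alpha.
Definition pb (S : R) := (Nf / (R0 * lamS) / S) `^ alpha.
Definition Dsep (M S m s : R) :=
  - pa M * (M - alpha * m) * S + lamS * pb S * (S - alpha * s) * M.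

Lemma lam0 : 0 < lamS.
Proof. by apply: lt_trans hlam. Qed.

Lemma Gs_eq (m s km ks t : R) : 0 < m - t + km -> 0 < s + t + ks ->
  sep (m - t + km) (s + t + ks) ->
  rev (m - t) (s + t) km ks = Gs (m + km) (s + ks) m s t.
Proof.
move=> hM hS hsep.
rewrite /rev /revenue /macro_price /small_price -/sep hsep /Gs.
have l0 := lam0.
have eM : m - t + km = m + km + (-1) * t by ring.
have eS : s + t + ks = s + ks + 1 * t by ring.
rewrite eM eS.
rewrite eM in hM; rewrite eS in hS.
have nM := gt_eqF hM; have nS := gt_eqF hS.
have nR := gt_eqF hR0; have nl := gt_eqF l0.
congr (_ `^ _ * _ + _ `^ _ * _).
- by field; rewrite nM nR.
- by ring.
- have nS1 : (s + ks + t == 0) = false by rewrite -nS mul1r.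
  by field; rewrite nS1 nR nl.
- by ring.
Qed.

Lemma Gs_derive (M S m s : R) : 0 < M -> 0 < S ->
  is_derive (0:R) (1:R) (Gs M S m s) (R0 / (M * S) * Dsep M S m s).
Proof.
move=> M0 S0.
have l0 := lam0.
have h1 := is_derive_term (-1) (m * R0) (- R0) alpha (divr_gt0 hNm hR0) M0.
have h2 := is_derive_term 1 (lamS * s * R0) (lamS * R0) alpha
   (divr_gt0 hNf (mulr_gt0 hR0 l0)) S0.
have h3 := is_deriveD h1 h2.
have -> : Gs M S m s = (fun t => (Nm / R0 / (M + (-1) * t)) `^ alpha * (m * R0 + (- R0) * t)) +
  (fun t => (Nf / (R0 * lamS) / (S + 1 * t)) `^ alpha * (lamS * s * R0 + (lamS * R0) * t)).
  by apply/funext.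
apply: is_derive_eq h3 _.
rewrite /Dsep /pa /pb.
by field; rewrite !gt_eqF.
Qed.

Definition Gc (T X t : R) : R :=
  ((Nm + Nf) / R0 / (T + (lamS - 1) * t)) `^ alpha * (X * R0 + ((lamS - 1) * R0) * t).

Lemma Gc_eq (m s km ks t : R) : 0 < m - t + km + lamS * (s + t + ks) ->
  ~~ sep (m - t + km) (s + t + ks) ->
  rev (m - t) (s + t) km ks = Gc (m + km + lamS * (s + ks)) (m + lamS * s) t.
Proof.
move=> hT hsep.
rewrite /rev /revenue /macro_price /small_price -/sep (negbTE hsep) /Gc /common_price.
rewrite -mulrDr.
have eT : m - t + km + lamS * (s + t + ks) = m + km + lamS * (s + ks) + (lamS - 1) * t by ring.
rewrite eT in hT.
congr (_ `^ _ * _).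
- by field; rewrite (gt_eqF hT) (gt_eqF hR0).
- by ring.
Qed.

Lemma Gc_derive (T X : R) : 0 < T ->
  is_derive (0:R) (1:R) (Gc T X)
   (((Nm + Nf) / R0 / T) `^ alpha * (lamS - 1) * R0 * (T - alpha * X) / T).
Proof.
move=> T0.
have h1 := is_derive_term (lamS - 1) (X * R0) ((lamS - 1) * R0) alpha
   (divr_gt0 (addr_gt0 hNm hNf) hR0) T0.
apply: is_derive_eq h1 _.
by field; rewrite gt_eqF.
Qed.

Lemma right_cond (Bi B0 m s km ks : R) :
  feasible Bi B0 m s -> B0 < s -> 0 <= km -> 0 < ks -> 0 < B0 ->
  (forall x y, feasible Bi B0 x y -> rev x y km ks <= rev m s km ks) ->
  0 < m -> sep (m + km) (s + ks) -> Dsep (m + km) (s + ks) m s <= 0.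
Proof.
move=> [hm [hBs hsum]] hs hkm hks hB0 Hbr m0 hsep.
rewrite leNgt; apply/negP => hD.
have M0 : 0 < m + km by rewrite ltr_wpDr.
have S0 : 0 < s + ks by rewrite addr_gt0 // (lt_trans hB0 hs).
have hd := Gs_derive m s M0 S0.
have hpos : 0 < R0 / ((m + km) * (s + ks)) * Dsep (m + km) (s + ks) m s.
  by rewrite mulr_gt0 // divr_gt0 // mulr_gt0.
have [t [/andP [t0 tm] hlt]] := deriv_pos hd hpos m0.
have E0 : rev m s km ks = Gs (m + km) (s + ks) m s 0.
  have := @Gs_eq m s km ks 0; rewrite !subr0 !addr0; apply => //.
have Et : rev (m - t) (s + t) km ks = Gs (m + km) (s + ks) m s t.
  apply: Gs_eq.
  - lra.
  - lra.
  - move: hsep; rewrite /sep /separate_market => hsep.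
    have l0 := lam0.
    have e1 : Nf * (m - t + km) = Nf * (m + km) - Nf * t by ring.
    have e2 : Nm * (lamS * (s + t + ks)) = Nm * (lamS * (s + ks)) + Nm * (lamS * t) by ring.
    rewrite e1 e2.
    have p1 : 0 < Nf * t by rewrite mulr_gt0.
    have p2 : 0 < Nm * (lamS * t) by rewrite !mulr_gt0.
    lra.
have hfe : feasible Bi B0 (m - t) (s + t).
  split; first by rewrite subr_ge0 ltW.
  split; first by rewrite (le_trans hBs) // lerDl ltW.
  lra.
have := Hbr _ _ hfe.
by rewrite Et E0 leNgt hlt.
Qed.

Lemma left_cond (Bi B0 m s km ks : R) :
  feasible Bi B0 m s -> B0 < s -> 0 <= km -> 0 < ks -> 0 < B0 ->
  (forall x y, feasible Bi B0 x y -> rev x y km ks <= rev m s km ks) ->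
  0 < m + km -> Nf * (m + km) < Nm * (lamS * (s + ks)) ->
  0 <= Dsep (m + km) (s + ks) m s.
Proof.
move=> [hm [hBs hsum]] hs hkm hks hB0 Hbr M0 hsep.
rewrite leNgt; apply/negP => hD.
have S0 : 0 < s + ks by rewrite addr_gt0 // (lt_trans hB0 hs).
have l0 := lam0.
have hd := Gs_derive m s M0 S0.
have hneg : R0 / ((m + km) * (s + ks)) * Dsep (m + km) (s + ks) m s < 0.
  by rewrite pmulr_rlt0 // divr_gt0 // mulr_gt0.
have k0 : 0 < Nf + Nm * lamS by rewrite addr_gt0 // mulr_gt0.
pose dl := (Nm * (lamS * (s + ks)) - Nf * (m + km)) / (Nf + Nm * lamS).
have dl0 : 0 < dl by rewrite divr_gt0 // subr_gt0.
have e0 : 0 < Num.min (s - B0) dl by rewrite lt_min subr_gt0 hs dl0.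
have [t [/andP [te t0] hlt]] := deriv_neg hd hneg e0.
have te1 : - t < s - B0.
  by rewrite ltrNl; apply: le_lt_trans te; rewrite lerN2 ge_min lexx.
have te2 : - t < dl.
  by rewrite ltrNl; apply: le_lt_trans te; rewrite lerN2 ge_min lexx orbT.
have te3 : - t * (Nf + Nm * lamS) < Nm * (lamS * (s + ks)) - Nf * (m + km).
  by rewrite -ltr_pdivlMr.
have E0 : rev m s km ks = Gs (m + km) (s + ks) m s 0.
  have := @Gs_eq m s km ks 0; rewrite !subr0 !addr0; apply => //.
  by rewrite /sep /separate_market ltW.
have Et : rev (m - t) (s + t) km ks = Gs (m + km) (s + ks) m s t.
  apply: Gs_eq.
  - lra.
  - lra.
  - rewrite /sep /separate_market.
    have e1 : Nf * (m - t + km) = Nf * (m + km) + Nf * (- t) by ring.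
    have e2 : Nm * (lamS * (s + t + ks)) = Nm * (lamS * (s + ks)) - Nm * lamS * (- t) by ring.
    rewrite e1 e2.
    have e3 : - t * (Nf + Nm * lamS) = Nf * (- t) + Nm * lamS * (- t) by ring.
    rewrite e3 in te3.
    lra.
have hfe : feasible Bi B0 (m - t) (s + t).
  split; first lra.
  split; first by lra.
  lra.
have := Hbr _ _ hfe.
by rewrite Et E0 leNgt hlt.
Qed.

Lemma comm_cond (Bi B0 m s km ks : R) :
  feasible Bi B0 m s -> B0 < s -> 0 <= km -> 0 < ks -> 0 < B0 ->
  (forall x y, feasible Bi B0 x y -> rev x y km ks <= rev m s km ks) ->
  Nm * (lamS * (s + ks)) < Nf * (m + km) -> m = 0.
Proof.
move=> [hm [hBs hsum]] hs hkm hks hB0 Hbr hsep.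
have [m0|] := ltP 0 m; last by move=> h; apply/eqP; rewrite eq_le h hm.
exfalso.
have l0 := lam0.
have S0 : 0 < s + ks by lra.
pose T := m + km + lamS * (s + ks).
pose X := m + lamS * s.
have T0 : 0 < T.
  rewrite /T; have h1 : 0 < lamS * (s + ks) by rewrite mulr_gt0. lra.
have hd := Gc_derive X T0.
have XT : X <= T.
  rewrite /X /T; have h1 : 0 <= lamS * ks by rewrite mulr_ge0 // ltW.
  rewrite mulrDr; lra.
have X0 : 0 <= X.
  rewrite /X; have h1 : 0 <= lamS * s by rewrite mulr_ge0 // ltW; lra.
  lra.
have TX : 0 < T - alpha * X.
  have h1 : alpha * X <= alpha * T by rewrite ler_pM2l.
  have h2 : alpha * T < 1 * T by rewrite ltr_pM2r.
  lra.
have hpos : 0 < ((Nm + Nf) / R0 / T) `^ alpha * (lamS - 1) * R0 * (T - alpha * X) / T.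
  have p1 : 0 < ((Nm + Nf) / R0 / T) `^ alpha.
    by apply: powR_gt0; rewrite !divr_gt0 // addr_gt0.
  have p2 : 0 < lamS - 1 by rewrite subr_gt0.
  by apply: divr_gt0 => //; rewrite !mulr_gt0.
have k0 : 0 < Nf + Nm * lamS by rewrite addr_gt0 // mulr_gt0.
pose dl := (Nf * (m + km) - Nm * (lamS * (s + ks))) / (Nf + Nm * lamS).
have dl0 : 0 < dl by rewrite divr_gt0 // subr_gt0.
have e0 : 0 < Num.min m dl by rewrite lt_min m0 dl0.
have [t [/andP [t0 te] hlt]] := deriv_pos hd hpos e0.
have te1 : t < m by apply: lt_le_trans te _; rewrite ge_min lexx.
have te2 : t < dl by apply: lt_le_trans te _; rewrite ge_min lexx orbT.
have te3 : t * (Nf + Nm * lamS) < Nf * (m + km) - Nm * (lamS * (s + ks)).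
  by rewrite -ltr_pdivlMr.
have E0 : rev m s km ks = Gc T X 0.
  have := @Gc_eq m s km ks 0; rewrite !subr0 !addr0; apply => //.
  by rewrite /sep /separate_market -ltNge.
have Et : rev (m - t) (s + t) km ks = Gc T X t.
  apply: Gc_eq.
  - have e1 : m - t + km + lamS * (s + t + ks) = T + (lamS - 1) * t by rewrite /T; ring.
    rewrite e1; have h1 : 0 < (lamS - 1) * t by rewrite mulr_gt0 // subr_gt0.
    lra.
  - rewrite /sep /separate_market -ltNge.
    have e1 : Nf * (m - t + km) = Nf * (m + km) - Nf * t by ring.
    have e2 : Nm * (lamS * (s + t + ks)) = Nm * (lamS * (s + ks)) + Nm * lamS * t by ring.
    rewrite e1 e2.
    have e3 : t * (Nf + Nm * lamS) = Nf * t + Nm * lamS * t by ring.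
    rewrite e3 in te3.
    lra.
have hfe : feasible Bi B0 (m - t) (s + t).
  split; first lra.
  split; first lra.
  lra.
have := Hbr _ _ hfe.
by rewrite Et E0 leNgt hlt.
Qed.

Lemma zero_cond (Bi B0 m s km ks : R) :
  feasible Bi B0 m s -> B0 < s -> 0 <= km -> 0 < ks -> 0 < B0 ->
  (forall x y, feasible Bi B0 x y -> rev x y km ks <= rev m s km ks) ->
  m = 0 -> km = 0 -> False.
Proof.
move=> [hm [hBs hsum]] hs hkm hks hB0 Hbr m0 km0; subst m km.
have l0 := lam0.
pose S := s + ks.
have S0 : 0 < S by rewrite /S; lra.
pose q := (Nf / (R0 * (lamS * S))) `^ alpha.
have q0 : 0 < q by apply: powR_gt0; rewrite divr_gt0 // !mulr_gt0.
pose L := (lamS * q + 1) `^ (alpha^-1).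
have Lq0 : 0 < lamS * q + 1 by rewrite addr_gt0 // mulr_gt0.
have L0 : 0 < L by apply: powR_gt0.
have La : L `^ alpha = lamS * q + 1.
  by rewrite /L -powRrM mulVf ?gt_eqF // powRr1 // ltW.
have k0 : 0 < Nf + Nm * lamS by rewrite addr_gt0 // mulr_gt0.
pose d1 := Nm / (R0 * L).
pose d3 := Nm * (lamS * S) / (Nf + Nm * lamS).
have d10 : 0 < d1 by rewrite divr_gt0 // mulr_gt0.
have d30 : 0 < d3 by rewrite divr_gt0 // !mulr_gt0.
pose mn := Num.min d1 (Num.min (s - B0) d3).
have mn0 : 0 < mn by rewrite !lt_min d10 d30 subr_gt0 hs.
pose e := mn / 2.
have e0 : 0 < e by rewrite divr_gt0.
have emn : e < mn by rewrite /e ltr_pdivrMr // ltr_pMr // ltr1n.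
have e1 : e < d1 by apply: lt_le_trans emn _; rewrite ge_min lexx.
have e2 : e < s - B0 by apply: lt_le_trans emn _; rewrite !ge_min lexx orbT.
have e3 : e < d3 by apply: lt_le_trans emn _; rewrite !ge_min lexx !orbT.
have hfe : feasible Bi B0 e (s - e).
  split; first exact: ltW.
  split; first lra.
  lra.
have := Hbr _ _ hfe.
apply/negP; rewrite -ltNge.
have sep0 : sep (0 + 0) (s + ks).
  by rewrite /sep /separate_market addr0 mulr0 mulr_ge0 // ?mulr_ge0 // ltW.
have e3' : e * (Nf + Nm * lamS) < Nm * (lamS * S) by rewrite -ltr_pdivlMr.
have sep1 : sep (e + 0) (s - e + ks).
  rewrite /sep /separate_market addr0.
  have E1 : Nm * (lamS * (s - e + ks)) = Nm * (lamS * S) - Nm * lamS * e by rewrite /S; ring.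
  rewrite E1.
  have E2 : e * (Nf + Nm * lamS) = Nf * e + Nm * lamS * e by ring.
  rewrite E2 in e3'.
  lra.
rewrite /rev /revenue /macro_price /small_price -/sep sep0 sep1.
rewrite !addr0 mul0r mulr0 add0r -/S.
have hS1 : 0 < s - e + ks by lra.
have P1 : lamS * q + 1 <= (Nm / (R0 * e)) `^ alpha.
  rewrite -La; apply: ge0_ler_powR; rewrite ?nnegrE ?ltW //.
    by rewrite divr_gt0 // mulr_gt0.
  rewrite ltr_pdivlMr ?mulr_gt0 //.
  have -> : L * (R0 * e) = e * (R0 * L) by ring.
  by move: e1; rewrite /d1 ltr_pdivlMr ?mulr_gt0.
have P2 : q <= (Nf / (R0 * (lamS * (s - e + ks)))) `^ alpha.
  apply: ge0_ler_powR; rewrite ?nnegrE ?ltW //.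
    by rewrite divr_gt0 // !mulr_gt0.
    by rewrite divr_gt0 // !mulr_gt0.
  rewrite ltr_pM2l // ltf_pV2 ?posrE ?mulr_gt0 //.
  rewrite ltr_pM2l // ltr_pM2l // /S; lra.
have P3 : 0 <= lamS * (s - e) * R0 by rewrite !mulr_ge0 // ?ltW //; lra.
have P4 : (lamS * q + 1) * (e * R0) <= (Nm / (R0 * e)) `^ alpha * (e * R0).
  by rewrite ler_pM2r // mulr_gt0.
have P5 : q * (lamS * (s - e) * R0) <=
   (Nf / (R0 * (lamS * (s - e + ks)))) `^ alpha * (lamS * (s - e) * R0).
  by rewrite ler_wpM2r.
have E3 : q * (lamS * s * R0) = q * (lamS * (s - e) * R0) + (lamS * q) * (e * R0) by ring.
rewrite E3.
have P6 : 0 < e * R0 by rewrite mulr_gt0.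
lra.
Qed.

Lemma alg_sep_zero (A Bq M S s1 s2 : R) : 0 < A -> 0 < Bq -> 0 < M -> 0 < s1 -> 0 < s2 ->
  S = s1 + s2 ->
  0 <= - A * (M - alpha * 0) * S + Bq * (S - alpha * s1) * M ->
  - A * (M - alpha * M) * S + Bq * (S - alpha * s2) * M <= 0 -> False.
Proof.
move=> A0 B0 M0 s10 s20 eS h1 h2.
have h1' : A * S <= Bq * (S - alpha * s1).
  have e : - A * (M - alpha * 0) * S + Bq * (S - alpha * s1) * M =
     M * (Bq * (S - alpha * s1) - A * S) by ring.
  by move: h1; rewrite e pmulr_rge0 // subr_ge0.
have h2' : Bq * (S - alpha * s2) <= (1 - alpha) * (A * S).
  have e : - A * (M - alpha * M) * S + Bq * (S - alpha * s2) * M =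
     M * (Bq * (S - alpha * s2) - (1 - alpha) * (A * S)) by ring.
  by move: h2; rewrite e pmulr_rle0 // subr_le0.
have h3 : (1 - alpha) * (A * S) <= (1 - alpha) * (Bq * (S - alpha * s1)).
  by rewrite ler_pM2l // subr_gt0.
have h4 : 0 < Bq * (alpha * s1 * (2 - alpha)).
  by rewrite !mulr_gt0 // subr_gt0 (lt_trans ha1) // ltr1n.
have e : Bq * (alpha * s1 * (2 - alpha)) =
   Bq * (S - alpha * s2) - (1 - alpha) * (Bq * (S - alpha * s1)).
  by rewrite eS; ring.
lra.
Qed.

Lemma alg_bnd_zero (A Bq M S s2 : R) : 0 < A -> A < Bq -> 0 < M -> 0 < S -> s2 < S ->
  - A * (M - alpha * M) * S + Bq * (S - alpha * s2) * M <= 0 -> False.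
Proof.
move=> A0 AB M0 S0' sS h2.
have B0 : 0 < Bq by apply: lt_trans AB.
have S0 : 0 < S - s2 by rewrite subr_gt0.
have e : - A * (M - alpha * M) * S + Bq * (S - alpha * s2) * M =
   M * ((Bq - A) * ((1 - alpha) * S) + Bq * (alpha * (S - s2))) by ring.
move: h2; rewrite e pmulr_rle0 // leNgt => /negP; apply.
have p1 : 0 < (Bq - A) * ((1 - alpha) * S) by rewrite !mulr_gt0 // subr_gt0.
have p2 : 0 < Bq * (alpha * (S - s2)) by rewrite !mulr_gt0.
lra.
Qed.

Lemma alg_both_sep (M S m1 m2 s1 s2 B1 : R) : 0 < M -> 0 < S ->
  M = m1 + m2 -> S = s1 + s2 -> 0 <= m1 -> 0 < s1 -> m1 + s1 <= B1 ->
  Dsep M S m1 s1 = 0 -> Dsep M S m2 s2 = 0 ->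
  s1 <= BS_NE Nm Nf lamS alpha B1.
Proof.
move=> M0 S0 eM eS hm1 hs1 hB D1 D2.
have l0 := lam0.
have A0 : 0 < pa M by apply: powR_gt0; rewrite !divr_gt0.
have pb0 : 0 < pb S by apply: powR_gt0; rewrite !divr_gt0 // mulr_gt0.
have hsum : (2 - alpha) * M * S * (lamS * pb S - pa M) = 0.
  have e : Dsep M S m1 s1 + Dsep M S m2 s2 = (2 - alpha) * M * S * (lamS * pb S - pa M).
    by rewrite /Dsep eM eS; ring.
  by rewrite -e D1 D2 addr0.
have eq1 : lamS * pb S = pa M.
  have n2 : (2 - alpha == 0) = false.
    by apply: gt_eqF; rewrite subr_gt0 (lt_trans ha1) // ltr1n.
  move/eqP: hsum; rewrite !mulf_eq0 (gt_eqF M0) (gt_eqF S0) n2 /= subr_eq0.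
  by move=> /eqP.
have msS : m1 * S = s1 * M.
  have e : Dsep M S m1 s1 = pa M * alpha * (m1 * S - s1 * M).
    by rewrite /Dsep eq1; ring.
  move/eqP: D1; rewrite e !mulf_eq0 (gt_eqF A0) (gt_eqF ha0) /= subr_eq0.
  by move=> /eqP.
pose L := lamS `^ (alpha^-1 - 1).
have L0 : 0 < L by apply: powR_gt0.
have La : lamS `^ (alpha^-1) = L * lamS.
  have -> : alpha^-1 = alpha^-1 - 1 + 1 by rewrite subrK.
  rewrite powRD; last by rewrite (gt_eqF l0) implybT.
  by rewrite powRr1 // ltW.
have Laa : (lamS `^ (alpha^-1)) `^ alpha = lamS.
  by rewrite -powRrM mulVf ?gt_eqF // powRr1 // ltW.
have eq2 : lamS * pb S = (lamS `^ (alpha^-1) * (Nf / (R0 * lamS) / S)) `^ alpha.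
  rewrite powRM ?Laa //; first by rewrite powR_ge0.
  by rewrite ltW // !divr_gt0 // mulr_gt0.
have eq3 : lamS `^ (alpha^-1) * (Nf / (R0 * lamS) / S) = Nm / R0 / M.
  apply: (powR_injective ha0); rewrite ?nnegrE.
  - by rewrite mulr_ge0 ?powR_ge0 // ltW // !divr_gt0 // mulr_gt0.
  - by rewrite ltW // !divr_gt0.
  - by rewrite /= -eq2 eq1.
have key : Nm * S = L * Nf * M.
  have e : Nm * S = (Nm / R0 / M) * (R0 * M * S) by field; rewrite !gt_eqF.
  by rewrite e -eq3 La; field; rewrite !gt_eqF.
rewrite /BS_NE -/L ler_pdivlMr; last by rewrite addr_gt0 // mulr_gt0.
rewrite -(ler_pM2r S0).
have e : s1 * (Nf * L + Nm) * S =
   Nf * L * S * (s1 + m1) + s1 * (Nm * S - L * Nf * M) + Nf * L * (s1 * M - m1 * S) by ring.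
rewrite e key msS !subrr mulr0 !addr0.
have -> : Nf * L * B1 * S = Nf * L * S * B1 by ring.
by rewrite mulr0 addr0 ler_pM2l ?mulr_gt0 // addrC.
Qed.

Lemma main_aux (B1 B2 B01 B02 B1M B1S B2M B2S : R) :
  0 < B1 -> 0 < B2 -> BS_NE Nm Nf lamS alpha B1 < B01 ->
  BS_NE Nm Nf lamS alpha B2 < B02 ->
  constrained_NE Nm Nf R0 lamS alpha B1 B2 B01 B02 B1M B1S B2M B2S ->
  (B1S = B01 /\ B2S = B02) \/ ((B1S = B01 /\ B02 < B2S) \/ (B01 < B1S /\ B2S = B02)).
Proof.
move=> hB1 hB2 hv1 hv2 [hf1 hf2 Hbr1 Hbr2].
have l0 := lam0.
have bs0 : forall B, 0 < B -> 0 < BS_NE Nm Nf lamS alpha B.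
  move=> B B0; rewrite /BS_NE.
  have p : 0 < lamS `^ (alpha^-1 - 1) by apply: powR_gt0.
  by rewrite divr_gt0 // ?mulr_gt0 // addr_gt0 // mulr_gt0.
have h01 : 0 < B01 := lt_trans (bs0 _ hB1) hv1.
have h02 : 0 < B02 := lt_trans (bs0 _ hB2) hv2.
have hf1' := hf1; have hf2' := hf2.
case: hf1' => [hm1 [hs1 hsum1]]; case: hf2' => [hm2 [hs2 hsum2]].
move: hs1; rewrite le_eqVlt => /orP [/eqP e1 | l1];
  move: hs2; rewrite le_eqVlt => /orP [/eqP e2 | l2].
- by left; split.
- by right; left; split.
- by right; right; split.
exfalso.
have s10 : 0 < B1S := lt_trans h01 l1.
have s20 : 0 < B2S := lt_trans h02 l2.
have R1 := right_cond hf1 l1 hm2 s20 h01 Hbr1.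
have R2 := right_cond hf2 l2 hm1 s10 h02 Hbr2.
rewrite [B2M + B1M]addrC [B2S + B1S]addrC in R2.
set M := B1M + B2M in R1 R2.
set S := B1S + B2S in R1 R2.
have S0 : 0 < S by rewrite /S addr_gt0.
have [M0|Mpos] : M = 0 \/ 0 < M.
  by move: (addr_ge0 hm1 hm2); rewrite -/M le_eqVlt => /orP [/eqP ->|->]; [left|right].
  have e1 : B1M = 0 by move: M0; rewrite /M; lra.
  have e2 : B2M = 0 by move: M0; rewrite /M; lra.
  exact: (zero_cond hf1 l1 hm2 s20 h01 Hbr1 e1 e2).
have A0 : 0 < pa M by apply: powR_gt0; rewrite !divr_gt0.
have pb0 : 0 < pb S by apply: powR_gt0; rewrite !divr_gt0 // mulr_gt0.
have Bq0 : 0 < lamS * pb S by rewrite mulr_gt0.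
have m1c : B1M = 0 \/ 0 < B1M.
  by move: hm1; rewrite le_eqVlt => /orP [/eqP ->|->]; [left|right].
have m2c : B2M = 0 \/ 0 < B2M.
  by move: hm2; rewrite le_eqVlt => /orP [/eqP ->|->]; [left|right].
have eS : S = B1S + B2S by [].
case: (ltgtP (Nf * M) (Nm * (lamS * S))) => hreg.
-
  have L1 := left_cond hf1 l1 hm2 s20 h01 Hbr1.
  have L2 := left_cond hf2 l2 hm1 s10 h02 Hbr2.
  rewrite -/M -/S in L1.
  rewrite [B2M + B1M]addrC [B2S + B1S]addrC -/M -/S in L2.
  have {}L1 := L1 Mpos hreg.
  have {}L2 := L2 Mpos hreg.
  have hsep : sep M S by rewrite /sep /separate_market ltW.
  case: m1c => [m1z|m1p].
    have eB2 : B2M = M by rewrite /M m1z add0r.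
    have m2p : 0 < B2M by rewrite eB2.
    have D2 := R2 m2p hsep.
    rewrite eB2 in D2; rewrite m1z in L1.
    exact: (alg_sep_zero A0 Bq0 Mpos s10 s20 eS L1 D2).
  case: m2c => [m2z|m2p].
    have eB1 : B1M = M by rewrite /M m2z addr0.
    have D1 := R1 m1p hsep.
    rewrite eB1 in D1; rewrite m2z in L2.
    have eS' : S = B2S + B1S by rewrite eS addrC.
    exact: (alg_sep_zero A0 Bq0 Mpos s20 s10 eS' L2 D1).
  have D1 : Dsep M S B1M B1S = 0 by apply/eqP; rewrite eq_le L1 R1.
  have D2 : Dsep M S B2M B2S = 0 by apply/eqP; rewrite eq_le L2 R2.
  have := alg_both_sep Mpos S0 (erefl M) eS hm1 s10 hsum1 D1 D2.
  lra.
-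
  have C1 := comm_cond hf1 l1 hm2 s20 h01 Hbr1.
  rewrite -/M -/S in C1. have {}C1 := C1 hreg.
  have C2 := comm_cond hf2 l2 hm1 s10 h02 Hbr2.
  rewrite [B2M + B1M]addrC [B2S + B1S]addrC -/M -/S in C2.
  have {}C2 := C2 hreg.
  by move: Mpos; rewrite /M C1 C2 addr0 ltxx.
-
  have hsep : sep M S by rewrite /sep /separate_market hreg.
  have pbpa : pb S = pa M.
    rewrite /pb /pa; congr (_ `^ _).
    apply/eqP; rewrite -subr_eq0.
    have -> : Nf / (R0 * lamS) / S - Nm / R0 / M =
        (Nf * M - Nm * (lamS * S)) / (R0 * lamS * S * M).
      by field; rewrite !gt_eqF.
    by rewrite hreg subrr mul0r.
  have AB : pa M < lamS * pb S by rewrite pbpa ltr_pMl.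
  case: m1c => [m1z|m1p].
    have eB2 : B2M = M by rewrite /M m1z add0r.
    have m2p : 0 < B2M by rewrite eB2.
    have D2 := R2 m2p hsep.
    rewrite eB2 in D2.
    have sS : B2S < S by rewrite eS ltr_pwDl.
    exact: (alg_bnd_zero A0 AB Mpos S0 sS D2).
  case: m2c => [m2z|m2p].
    have eB1 : B1M = M by rewrite /M m2z addr0.
    have D1 := R1 m1p hsep.
    rewrite eB1 in D1.
    have sS : B1S < S by rewrite eS ltr_pwDr.
    exact: (alg_bnd_zero A0 AB Mpos S0 sS D1).
  have D1 := R1 m1p hsep.
  have D2 := R2 m2p hsep.
  have e : Dsep M S B1M B1S + Dsep M S B2M B2S =
      (2 - alpha) * M * S * (lamS * pb S - pa M).
    by rewrite /Dsep /M eS; ring.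
  have p : 0 < (2 - alpha) * M * S * (lamS * pb S - pa M).
    by rewrite !mulr_gt0 // subr_gt0 // (lt_trans ha1) // ltr1n.
  lra.
Qed.

End Model2.

Theorem proposition1 (R : realType) (Nm Nf R0 lamS alpha B1 B2 B01 B02 : R)
  (hNm : 0 < Nm) (hNf : 0 < Nf) (hR0 : 0 < R0) (hlam : 1 < lamS)
  (ha0 : 0 < alpha) (ha1 : alpha < 1) (hB1 : 0 < B1) (hB2 : 0 < B2)
  (hviol1 : BS_NE Nm Nf lamS alpha B1 < B01)
  (hviol2 : BS_NE Nm Nf lamS alpha B2 < B02)
  (B1M B1S B2M B2S : R) :
  constrained_NE Nm Nf R0 lamS alpha B1 B2 B01 B02 B1M B1S B2M B2S ->
  (* Type I *)
  (B1S = B01 /\ B2S = B02) \/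
  (* Type II *)
  ((B1S = B01 /\ B02 < B2S) \/ (B01 < B1S /\ B2S = B02)).
Proof.
move=> hNE.
by apply: (main_aux hNm hNf hR0 hlam ha0 ha1 hB1 hB2 hviol1 hviol2 hNE).
Qed.
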